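(* Let $F:[0,1]^n\to\mathbb{R}$ be twice differentiable, and let $\omega\in\mathbb{R}_{+}$ be such that for all $x\in[0,1]^n$ and all $i,j$, $\nabla^2F(x)_{i,i}=0$ and $\nabla^2F(x)_{i,j}\le\omega$. Then $F$ is $\left(\frac{n}{2}(n^{3/2}-1)\omega\right)$-up-concave.
   Context: $F:[0,1]^n\to\mathbb{R}$ is $\epsilon$-up-concave ($\epsilon\ge0$) if for every $u\in\mathbb{R}^n_{+}$, $x\in[0,1]^n$, the function $G_{x,u}(t)=F(tu+x)$ satisfies $G_{x,u}(\lambda t_1+(1-\lambda)t_2)\ge\lambda G_{x,u}(t_1)+(1-\lambda)G_{x,u}(t_2)-\epsilon$ for all $\lambda\in[0,1]$ and $t_1,t_2\in\mathbb{R}$ such that $t_1u+x$, $t_2u+x$, and $x+\lambda t_1u+(1-\lambda)t_2u$ lie in $[0,1]^n$. *)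

(* Defs.v *)
From HB Require Import structures.
From mathcomp Require Import all_boot all_order all_algebra.
From mathcomp Require Import all_classical all_reals all_analysis.
Set Implicit Arguments. Unset Strict Implicit. Unset Printing Implicit Defensive.
Import Order.TTheory GRing.Theory Num.Theory.
Import numFieldNormedType.Exports.
Local Open Scope ring_scope.

(* points of R^n are row vectors 'rV[R]_n; x ord0 i is the i-th coordinate *)

Definition in_cube (R : realType) (n : nat) (x : 'rV[R]_n) : Prop :=
  forall i : 'I_n, 0 <= x ord0 i <= 1.

Definition nonneg_vec (R : realType) (n : nat) (u : 'rV[R]_n) : Prop :=
  forall i : 'I_n, 0 <= u ord0 i.

Definition basis_vec (R : realType) (n : nat) (i : 'I_n) : 'rV[R]_n :=
  delta_mx ord0 i.

Definition partial (R : realType) (n : nat) (i : 'I_n)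
  (F : 'rV[R]_n -> R) : 'rV[R]_n -> R :=
  fun y => 'D_(basis_vec R i) F y.

Definition hessian (R : realType) (n : nat) (F : 'rV[R]_n -> R)
  (x : 'rV[R]_n) (i j : 'I_n) : R :=
  'D_(basis_vec R j) (partial i F) x.

Definition twice_differentiable_on_cube (R : realType) (n : nat)
  (F : 'rV[R]_n -> R) : Prop :=
  forall x : 'rV[R]_n, in_cube x ->
    differentiable F x /\ forall i : 'I_n, differentiable (partial i F) x.

Definition up_concave (R : realType) (n : nat) (eps : R)
  (F : 'rV[R]_n -> R) : Prop :=
  forall (u x : 'rV[R]_n), nonneg_vec u -> in_cube x ->
  forall (lam t1 t2 : R), 0 <= lam <= 1 ->
    in_cube (t1 *: u + x) -> in_cube (t2 *: u + x) ->
    in_cube (x + (lam * t1) *: u + ((1 - lam) * t2) *: u) ->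
    F ((lam * t1 + (1 - lam) * t2) *: u + x)
      >= lam * F (t1 *: u + x) + (1 - lam) * F (t2 *: u + x) - eps.

(* Main.v *)
Require Import Defs.
From HB Require Import structures.
From mathcomp Require Import all_boot all_order all_algebra.
From mathcomp Require Import all_classical all_reals all_analysis.
From mathcomp Require Import ring lra.
Import Order.TTheory GRing.Theory Num.Theory.
Import numFieldNormedType.Exports.
Local Open Scope ring_scope.
Local Open Scope classical_set_scope.
Lemma conc1 (R : realType) (G : R -> R) (a b M : R) :
  a <= b ->
  (forall t, a <= t <= b -> derivable G t 1) ->
  (forall t, a < t < b -> derivable ('D_1 G) t 1 /\ 'D_1 ('D_1 G) t <= M) ->
  forall l, 0 <= l <= 1 ->
  l * G a + (1 - l) * G b - M / 2 * (l * (1 - l) * (b - a) ^+ 2)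
    <= G (l * a + (1 - l) * b).
Proof.
move=> ab dG ddG l /andP[l0 l1].
pose g : R -> R^o := fun r => M / 2 * r ^+ 2.
have dg (y : R) : is_derive y (1:R) g (M * y).
  apply: is_derive_eq; rewrite /GRing.scale /= -mulr2n -mulr_natr.
  by rewrite mulr1 mul1r -mulr_natr; field.
pose f : R -> R^o := g - G.
have Df (y : R) : a <= y <= b -> 'D_1 f y = M * y - 'D_1 G y.
  move=> hs; rewrite deriveB //; last exact: dG.
  by rewrite derive_val.
have cG (y:R) : a <= y <= b -> {for y, continuous G}.
  move=> hs; apply: differentiable_continuous.
  exact/derivable1_diffP/dG.
have cf (y:R) : a <= y <= b -> {for y, continuous f}.
  move=> hs; apply: continuousB; last exact: cG.
  apply: differentiable_continuous; apply/derivable1_diffP.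
  by have [] := dg y.
have dm (y : R) : is_derive y (1:R) (fun r : R => M * r : R^o) M.
  by apply: is_derive_eq; rewrite /GRing.scale /= mulr1.
pose h : R -> R^o := (fun r : R => M * r : R^o) - 'D_1 G.
have nh (x : R) : a < x < b -> \forall y \near x, h y = 'D_1 f y.
  move=> hx; have := near_in_itvoo (a:=a) (b:=b) (x:=x).
  rewrite in_itv /= hx => /(_ isT); apply: filterS => y.
  rewrite in_itv /= => /andP[ay yb].
  by rewrite Df ?ltW ?ay ?yb.
have Hf := @second_derivative_convex R f a b.
have H : f (conv (Itv01 l0 l1) (a:R^o) (b:R^o)) <= conv (Itv01 l0 l1) (f a : R^o) (f b : R^o).
  have ab' : forall x, x \in `]a, b[%R -> a <= x <= b.
    by move=> x; rewrite in_itv /= => /andP[? ?]; rewrite !ltW.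
  apply: Hf => //.
  - move=> x hx; rewrite -(near_eq_derive _ (nh x hx)).
    have [dd ddM] := ddG x hx.
    have dmx := dm x.
    rewrite deriveB //.
    by case: (dm x) => _ ->; rewrite subr_ge0.
  - have := cf b; rewrite ab lexx => /(_ isT) cb.
    exact: cvg_at_left_filter cb.
  - have := cf a; rewrite ab lexx => /(_ isT) cb.
    exact: cvg_at_right_filter cb.
  - move=> x /ab' hx; apply: derivableB; last exact: dG.
    by have [] := dg x.
  - move=> x hx; apply: near_eq_derivable (nh x _) _.
      by move: hx; rewrite in_itv.
    have [dd ddM] := ddG x hx.
    by apply: derivableB => //; have [] := dm x.
move: H; rewrite !convRE /= /f /g /= /unstable.onem !fctE => H.
have E : l * (M / 2 * a ^+ 2) + (1 - l) * (M / 2 * b ^+ 2)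
   - M / 2 * (l * a + (1 - l) * b) ^+ 2 = M / 2 * (l * (1 - l) * (b - a) ^+ 2).
  by ring.
lra.
Qed.
Section B.
Variables (R : realType) (n : nat).
Lemma line_fun (P : 'rV[R]_n -> R) (u x : 'rV[R]_n) (t : R) :
  (fun h : R => h^-1 *: ((fun s : R => P (s *: u + x)) (h *: (1:R) + t) - P (t *: u + x)))
  = (fun h : R => h^-1 *: (P (h *: u + (t *: u + x)) - P (t *: u + x))).
Proof.
apply/funext => h; congr (_ *: (P _ - _)).
have -> : h *: (1:R) + t = h + t by rewrite /GRing.scale /= mulr1.
by rewrite scalerDl addrA.
Qed.
Lemma line_derive (P : 'rV[R]_n -> R) (u x : 'rV[R]_n) (t : R) :
  'D_1 (fun s : R => P (s *: u + x)) t = 'D_u P (t *: u + x).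
Proof. by rewrite /derive /= line_fun. Qed.
Lemma line_derivable (P : 'rV[R]_n -> R) (u x : 'rV[R]_n) (t : R) :
  derivable P (t *: u + x) u -> derivable (fun s : R => P (s *: u + x)) t 1.
Proof. by rewrite /derivable /= line_fun. Qed.
Lemma derive_coord (P : 'rV[R]_n -> R) (u p : 'rV[R]_n) :
  differentiable P p ->
  'D_u P p = \sum_(i < n) u ord0 i * partial i P p.
Proof.
move=> dP; rewrite deriveE // {1}(row_sum_delta u) linear_sum.
apply: eq_bigr => i _; rewrite linearZ /= /partial /basis_vec deriveE //.
Qed.
End B.
Lemma sum_offdiag (R : realType) n (w : R) :
  \sum_(i < n) \sum_(j < n) (if i == j then 0 else w) = (n%:R ^+ 2 - n%:R) * w.
Proof.
have E (i : 'I_n) : \sum_(j < n) (if i == j then 0 else w) = n%:R * w - w.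
  rewrite (eq_bigr (fun j => w - (if i == j then w else 0))); last first.
    by move=> j _; case: eqP => _; rewrite ?subrr ?subr0.
  rewrite sumrB sumr_const card_ord -big_mkcond /=.
  rewrite (eq_bigl (fun j => j == i)); last by move=> j; rewrite eq_sym.
  by rewrite big_pred1_eq mulr_natl.
rewrite (eq_bigr (fun _ => n%:R * w - w)); last by move=> i _; exact: E.
rewrite sumr_const card_ord -mulr_natl; ring.
Qed.
Lemma powN (R : realType) (n : nat) :
  (n%:R : R) = 0 \/ (1 <= (n%:R : R) /\ (n%:R : R) <= powR n%:R (3 / 2)).
Proof.
case: n => [|m]; [by left|right].
have h1 : (1 : R) <= m.+1%:R by rewrite ler1n.
split => //; rewrite -{1}(@powRr1 R (m.+1%:R)) ?(le_trans _ h1) //.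
apply: ler_powR => //; lra.
Qed.

Lemma aux (R : realType) (n : nat) (F : 'rV[R]_n -> R) (omega : R) :
  twice_differentiable_on_cube F -> 0 <= omega ->
  (forall x : 'rV[R]_n, in_cube x ->
     forall i j : 'I_n, hessian F x i i = 0 /\ hessian F x i j <= omega) ->
  forall u x : 'rV[R]_n, nonneg_vec u -> forall a b l : R, a <= b -> 0 <= l <= 1 ->
  in_cube (a *: u + x) -> in_cube (b *: u + x) ->
  l * F (a *: u + x) + (1 - l) * F (b *: u + x)
    - (n%:R / 2) * (powR n%:R (3 / 2) - 1) * omega
  <= F ((l * a + (1 - l) * b) *: u + x).
Proof.
move=> dF om0 hF u x hu a b l ab hl ca cb.
have seg t : a <= t <= b -> in_cube (t *: u + x).
  move=> /andP[ta tb] i; move: (ca i) (cb i); rewrite !mxE => /andP[ha _] /andP[_ hb].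
  have ui := hu i.
  rewrite (le_trans ha) ?(le_trans _ hb) //= lerD2r ler_wpM2r //.
pose G := fun s : R => F (s *: u + x).
pose c (i j : 'I_n) := if i == j then 0 else omega.
pose M := \sum_(i < n) \sum_(j < n) (u ord0 i * u ord0 j * c i j).
have dG t : a <= t <= b -> derivable G t 1.
  move=> ht; apply: line_derivable; apply: diff_derivable.
  exact: (dF _ (seg t ht)).1.
have DG t : a <= t <= b ->
    'D_1 G t = \sum_(i < n) u ord0 i * partial i F (t *: u + x).
  move=> ht; rewrite /G line_derive derive_coord //.
  exact: (dF _ (seg t ht)).1.
pose K : R -> R := \sum_(i < n) (fun s : R => u ord0 i * partial i F (s *: u + x)).
have KE s : K s = \sum_(i < n) u ord0 i * partial i F (s *: u + x).
  by rewrite /K fct_sumE.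
have dK t : a <= t <= b -> is_derive t (1:R) K
    (\sum_(i < n) u ord0 i * \sum_(j < n) u ord0 j * hessian F (t *: u + x) i j).
  move=> ht; apply: is_derive_sum => i.
  pose phi := fun s : R => partial i F (s *: u + x).
  have dphi : derivable phi t 1.
    apply: line_derivable; apply: diff_derivable.
    exact: ((dF _ (seg t ht)).2 i).
  have -> : (fun s : R => u ord0 i * partial i F (s *: u + x)) = u ord0 i \*: phi.
    by apply/funext.
  have hz : is_derive t (1:R) (u ord0 i \*: phi) (u ord0 i *: 'D_1 phi t).
    by apply: is_deriveZ; apply: derivableP.
  apply: is_derive_eq hz _.
  rewrite /phi line_derive derive_coord //; last exact: ((dF _ (seg t ht)).2 i).
have ddG t : a < t < b -> derivable ('D_1 G) t 1 /\ 'D_1 ('D_1 G) t <= M.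
  move=> ht; have ht' : a <= t <= b by case/andP: ht => ? ?; rewrite !ltW.
  have nK : \forall y \near t, K y = 'D_1 G y.
    have := near_in_itvoo (a:=a) (b:=b) (x:=t).
    rewrite in_itv /= ht => /(_ isT); apply: filterS => y.
    rewrite in_itv /= => /andP[ay yb].
    by rewrite KE DG // !ltW.
  have [dk Dk] := dK t ht'.
  split; first exact: near_eq_derivable nK dk.
  rewrite -(near_eq_derive _ nK) Dk /M.
  apply: ler_sum => i _; rewrite mulr_sumr; apply: ler_sum => j _.
  have [Hii Hij] := hF _ (seg t ht') i j.
  rewrite /c; case: eqP => [<-|_].
    by rewrite Hii !mulr0.
  rewrite mulrA; apply: ler_wpM2l => //.
  by apply: mulr_ge0; apply: hu.
have := @conc1 R G a b M ab dG ddG l hl; rewrite /G => H.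
have c0 i j : 0 <= c i j by rewrite /c; case: eqP.
have M0 : 0 <= M.
  apply: sumr_ge0 => i _; apply: sumr_ge0 => j _.
  by rewrite !mulr_ge0 //; apply: hu.
have dd i : 0 <= (b - a) * u ord0 i <= 1.
  move: (ca i) (cb i); rewrite !mxE => /andP[ha _] /andP[_ hb].
  have ui := hu i.
  apply/andP; split; first by rewrite mulr_ge0 // subr_ge0.
  rewrite mulrBl; lra.
have hM : (b - a) ^+ 2 * M <= (n%:R ^+ 2 - n%:R) * omega.
  rewrite -sum_offdiag /M mulr_sumr; apply: ler_sum => i _.
  rewrite mulr_sumr; apply: ler_sum => j _.
  have [di1 di2] := andP (dd i); have [dj1 dj2] := andP (dd j).
  have e : (b - a) ^+ 2 * (u ord0 i * u ord0 j * c i j)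
     = ((b - a) * u ord0 i) * ((b - a) * u ord0 j) * c i j by ring.
  rewrite e -[X in _ <= X]mul1r; apply: ler_wpM2r => //.
  rewrite -[1]mul1r; apply: ler_pM => //.
have hP : (n%:R : R) = 0 \/ (1 <= (n%:R : R) /\ (n%:R : R) <= powR n%:R (3 / 2)).
  exact: powN.
have [l0 l1] := andP hl.
have hl4 : 4 * (l * (1 - l)) <= 1.
  have q := sqr_ge0 (2 * l - 1).
  have e : (2 * l - 1) ^+ 2 = 1 - 4 * (l * (1 - l)) by ring.
  lra.
have hl0 : 0 <= l * (1 - l) by nra.
have hba : 0 <= (b - a) ^+ 2 * M by rewrite mulr_ge0 // sqr_ge0.
have E1 : M / 2 * (l * (1 - l) * (b - a) ^+ 2) = (l * (1 - l)) * ((b - a) ^+ 2 * M) / 2 by ring.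
have E2 : M / 2 * (l * (1 - l) * (b - a) ^+ 2) <= (n%:R ^+ 2 - n%:R) * omega / 8.
  rewrite E1; nra.
suff : (n%:R ^+ 2 - n%:R) * omega / 8 <= n%:R / 2 * (powR n%:R (3 / 2) - 1) * omega by lra.
case: hP => [->|[h1 h2]]; first by rewrite expr0n /=; lra.
set N := (n%:R : R) in h1 h2 *; set P := powR N (3 / 2) in h2 *.
have k2 : 0 <= N * (N - 1) by rewrite mulr_ge0 //; lra.
have k1 : N * (N - 1) <= N * (P - 1) by rewrite ler_wpM2l //; lra.
have k3 : omega * (N * (N - 1)) <= omega * (N * (P - 1)) by rewrite ler_wpM2l.
have k4 : 0 <= omega * (N * (N - 1)) by rewrite mulr_ge0.
have e1 : (N ^+ 2 - N) * omega / 8 = omega * (N * (N - 1)) / 8 by ring.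
have e2 : N / 2 * (P - 1) * omega = omega * (N * (P - 1)) / 2 by ring.
rewrite e1 e2; lra.
Qed.

Local Close Scope classical_set_scope.
Theorem mainTheorem7 (R : realType) (n : nat) (F : 'rV[R]_n -> R) (omega : R) :
  twice_differentiable_on_cube F ->
  0 <= omega ->
  (forall x : 'rV[R]_n, in_cube x ->
     forall i j : 'I_n, hessian F x i i = 0 /\ hessian F x i j <= omega) ->
  up_concave ((n%:R / 2) * (powR n%:R (3 / 2) - 1) * omega) F.
Proof.
move=> dF om0 hF u x hu hx lam t1 t2 hl c1 c2 c3.
case: (leP t1 t2) => h.
  exact: (@aux R n F omega dF om0 hF u x hu t1 t2 lam h hl c1 c2).
have hl' : 0 <= 1 - lam <= 1.
  by case/andP: hl => ? ?; apply/andP; split; lra.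
have := @aux R n F omega dF om0 hF u x hu t2 t1 (1 - lam) (ltW h) hl' c2 c1.
have -> : (1 - lam) * t2 + (1 - (1 - lam)) * t1 = lam * t1 + (1 - lam) * t2 by ring.
have -> : 1 - (1 - lam) = lam by ring.
move=> H; rewrite /=; lra.
Qed.
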